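(* With $m_1,m_2$, $r$, $d$, ${\mathfrak p}$, $g$ and $k_{m_1,m_2}$ as below, define $F({\mathfrak z})=\int_{-1}^{{\mathfrak z}} g(t,k_{m_1,m_2})\,{\mathfrak p}(t)\,dt$. Then $F$ is smooth on $[-1,1]$ and satisfies: $F({\mathfrak z})>0$ for $-1<{\mathfrak z}<1$; $F(\pm1)=0$; $F'(-1)=2{\mathfrak p}(-1)/m_2$ and $F'(1)=-2{\mathfrak p}(1)/m_1$; and $\bigl(F'({\mathfrak z})/{\mathfrak p}({\mathfrak z})\bigr)'<0$ for all ${\mathfrak z}\in[-1,1]$.
   Context: $m_1,m_2$ are positive integers, $r$ is real with $0<|r|<1$, $d$ is a positive integer and ${\mathfrak p}(t)=(1+rt)^d$. The function $g(t,k)$ is $2\,\frac{(\frac1{m_1}+\frac1{m_2})e^{-kt}-(\frac{e^k}{m_1}+\frac{e^{-k}}{m_2})}{e^k-e^{-k}}$ for $k\neq0$ and $\frac{1-t}{m_2}-\frac{1+t}{m_1}$ for $k=0$. $k_{m_1,m_2}$ is the unique real number with $\int_{-1}^1 g(t,k_{m_1,m_2}){\mathfrak p}(t)\,dt=0$. *)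

(* Defs.v *)
From Stdlib Require Import Reals Lra ClassicalEpsilon.
Open Scope R_scope.

(* Total Riemann integral: the value of RiemannInt when f is Riemann
   integrable on [a,b] (well defined by proof irrelevance of RiemannInt,
   lemma RiemannInt_P5); an unspecified real otherwise. *)
Definition RInt (f : R -> R) (a b : R) : R :=
  epsilon (inhabits 0)
    (fun l => exists pr : Riemann_integrable f a b, RiemannInt pr = l).

Definition pp (r : R) (d : nat) (t : R) : R := (1 + r * t) ^ d.

Definition g (m1 m2 : nat) (t k : R) : R :=
  if Req_EM_T k 0 then
    (1 - t) / INR m2 - (1 + t) / INR m1
  else
    2 * ((/ INR m1 + / INR m2) * exp (- k * t) - (exp k / INR m1 + exp (- k) / INR m2))
      / (exp k - exp (- k)).

Definition kk (m1 m2 : nat) (r : R) (d : nat) : R :=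
  epsilon (inhabits 0)
    (fun k => RInt (fun t => g m1 m2 t k * pp r d t) (-1) 1 = 0).

Definition FF (m1 m2 : nat) (r : R) (d : nat) (z : R) : R :=
  RInt (fun t => g m1 m2 t (kk m1 m2 r d) * pp r d t) (-1) z.

Definition smooth_on (f : R -> R) (a b : R) : Prop :=
  exists D : nat -> R -> R,
    D 0%nat = f /\
    forall (n : nat) (x : R), a <= x <= b -> derivable_pt_lim (D n) x (D (S n) x).

(* Main.v *)
Require Import Defs.
From Stdlib Require Import Reals Lra Psatz ClassicalEpsilon FunctionalExtensionality.
From Coquelicot Require Import Coquelicot.
Open Scope R_scope.

Lemma bridge (f : R -> R) (a b : R) :
  (forall x, continuity_pt f x) -> Defs.RInt f a b = RInt f a b.
Proof.
  intros Hc.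
  assert (pr : Riemann_integrable f a b).
  { destruct (Rle_dec a b) as [H|H].
    - apply continuity_implies_RiemannInt; auto.
    - apply RiemannInt_P1, continuity_implies_RiemannInt; auto; lra. }
  unfold Defs.RInt.
  destruct (epsilon_spec (inhabits 0)
    (fun l => exists pr : Riemann_integrable f a b, RiemannInt pr = l)) as [pr' Hpr'].
  { exists (RiemannInt pr); exists pr; reflexivity. }
  rewrite <- Hpr'. symmetry. apply RInt_Reals.
Qed.

Fixpoint Cn (n : nat) (f : R -> R) : Prop :=
  match n with
  | O => True
  | S n => exists f', (forall x, derivable_pt_lim f x (f' x)) /\ Cn n f'
  end.
Definition Cinf f := forall n, Cn n f.

Lemma Cn_weak n : forall f, Cn (S n) f -> Cn n f.
Proof.
  induction n; intros f H; simpl; auto.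
  destruct H as [f' [H1 H2]]. exists f'; split; auto.
Qed.

Lemma Cn_plus n : forall f g, Cn n f -> Cn n g -> Cn n (fun x => f x + g x).
Proof.
  induction n; intros f g Hf Hg; simpl; auto.
  destruct Hf as [f' [H1 H2]]; destruct Hg as [g' [H3 H4]].
  exists (fun x => f' x + g' x); split; auto.
  intros x. apply (derivable_pt_lim_plus f g x); auto.
Qed.

Lemma Cn_mult n : forall f g, Cn n f -> Cn n g -> Cn n (fun x => f x * g x).
Proof.
  induction n; intros f g Hf Hg; simpl; auto.
  pose proof (Cn_weak _ _ Hf) as Hf0. pose proof (Cn_weak _ _ Hg) as Hg0.
  destruct Hf as [f' [H1 H2]]; destruct Hg as [g' [H3 H4]].
  exists (fun x => f' x * g x + f x * g' x); split.
  - intros x. apply (derivable_pt_lim_mult f g x); auto.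
  - apply Cn_plus; apply IHn; auto.
Qed.

Lemma Cn_const n : forall c, Cn n (fun _ => c).
Proof.
  induction n; intros c; simpl; auto.
  exists (fun _ => 0); split; auto. intros; apply derivable_pt_lim_const.
Qed.

Lemma Cn_id n : Cn n (fun x => x).
Proof.
  destruct n; simpl; auto.
  exists (fun _ => 1); split. intros; apply derivable_pt_lim_id. apply Cn_const.
Qed.

Lemma Cn_expl n : forall A c, Cn n (fun x => A * exp (c * x)).
Proof.
  induction n; intros A c; simpl; auto.
  exists (fun x => (A * c) * exp (c * x)); split; auto.
  intros x. apply is_derive_Reals. auto_derive; auto. ring.
Qed.

Lemma Cn_pow n : forall f k, Cn n f -> Cn n (fun x => f x ^ k).
Proof.
  intros f k Hf; induction k; simpl.
  - apply Cn_const.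
  - apply Cn_mult; auto.
Qed.

Lemma Cinf_Derive_n : forall n f, Cinf f -> forall x,
  derivable_pt_lim (Derive_n f n) x (Derive_n f (S n) x).
Proof.
  induction n; intros f Hf x.
  - destruct (Hf 1%nat) as [f' [H1 _]].
    assert (E : Derive_n f 1 x = f' x).
    { apply (is_derive_unique (fun y => f y)). apply is_derive_Reals; auto. }
    rewrite E. exact (H1 x).
  - assert (Hd : forall y, Derive f y = Derive_n f 1 y) by reflexivity.
    assert (HD : Cinf (Derive f)).
    { intros m. destruct (Hf (S m)) as [f' [H1 H2]].
      replace (Derive f) with f'; auto.
      apply functional_extensionality; intros y.
      symmetry; apply is_derive_unique, is_derive_Reals; auto. }
    assert (E : forall m, Derive_n f (S m) = Derive_n (Derive f) m).
    { intros m. apply functional_extensionality; intros y.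
      replace (S m) with (m + 1)%nat by lia. rewrite <- (Derive_n_comp f m 1%nat).
      apply Derive_n_ext; intros; reflexivity. }
    rewrite !E. apply IHn; auto.
Qed.

Lemma D_ne0 k : k <> 0 -> exp k - exp (- k) <> 0.
Proof.
  intros Hk H. apply Hk. assert (exp k = exp (-k)) by lra.
  apply exp_inv in H0. lra.
Qed.

Lemma D_sign k : 0 < k -> 0 < exp k - exp (- k).
Proof. intros; pose proof (exp_increasing (-k) k); lra. Qed.
Lemma D_sign' k : k < 0 -> exp k - exp (- k) < 0.
Proof. intros; pose proof (exp_increasing k (-k)); lra. Qed.

Lemma g_form m1 m2 k : (0 < m1)%nat -> (0 < m2)%nat -> k <> 0 -> forall t, g m1 m2 t k =
  (2 * (/ INR m1 + / INR m2) / (exp k - exp (- k))) * exp ((- k) * t)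
  - 2 * (exp k / INR m1 + exp (- k) / INR m2) / (exp k - exp (- k)).
Proof.
  intros h1 h2 Hk t. unfold g. destruct (Req_EM_T k 0) as [e|_]; [contradiction|].
  pose proof (D_ne0 k Hk). assert (INR m1 <> 0) by (apply not_0_INR; lia).
  assert (INR m2 <> 0) by (apply not_0_INR; lia). field; auto.
Qed.

Lemma g_form0 m1 m2 t : g m1 m2 t 0 = (1 - t) / INR m2 - (1 + t) / INR m1.
Proof. unfold g. destruct (Req_EM_T 0 0); [reflexivity|lra]. Qed.

Lemma g_cinf m1 m2 k : (0 < m1)%nat -> (0 < m2)%nat -> Cinf (fun t => g m1 m2 t k).
Proof.
  intros h1 h2 n. destruct (Req_EM_T k 0) as [->|Hk].
  - replace (fun t => g m1 m2 t 0) with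
      (fun t => (/INR m2 - /INR m1) + (-(/INR m2) - /INR m1) * t).
    + apply Cn_plus. apply Cn_const. apply Cn_mult. apply Cn_const. apply Cn_id.
    + apply functional_extensionality; intros t. rewrite g_form0. unfold Rdiv. ring.
  - replace (fun t => g m1 m2 t k) with
      (fun t => (2 * (/ INR m1 + / INR m2) / (exp k - exp (- k))) * exp ((- k) * t)
       + (- (2 * (exp k / INR m1 + exp (- k) / INR m2) / (exp k - exp (- k))))).
    + apply Cn_plus. apply Cn_expl. apply Cn_const.
    + apply functional_extensionality; intros t. rewrite g_form by auto. ring.
Qed.

Lemma pp_cinf r d : Cinf (pp r d).
Proof.
  intros n. unfold pp. apply (Cn_pow n (fun t => 1 + r * t)).
  apply Cn_plus. apply Cn_const. apply Cn_mult. apply Cn_const. apply Cn_id.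
Qed.

Lemma G_cinf m1 m2 r d k : (0 < m1)%nat -> (0 < m2)%nat -> Cinf (fun t => g m1 m2 t k * pp r d t).
Proof. intros h1 h2 n. apply Cn_mult. apply g_cinf; auto. apply pp_cinf. Qed.

Lemma Cinf_continuous f : Cinf f -> forall x, continuous f x.
Proof. intros H x. destruct (H 1%nat) as [f' [H1 _]]. apply (ex_derive_continuous f).
  exists (f' x). apply is_derive_Reals; auto. Qed.

Lemma Cinf_cont f : Cinf f -> forall x, continuity_pt f x.
Proof. intros H x. apply continuity_pt_filterlim, Cinf_continuous; auto. Qed.

Lemma g_m1 m1 m2 k : (0 < m1)%nat -> (0 < m2)%nat -> g m1 m2 (-1) k = 2 / INR m2.
Proof.
  intros h1 h2. assert (0 < INR m1) by (apply lt_0_INR; lia).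
  assert (0 < INR m2) by (apply lt_0_INR; lia).
  destruct (Req_EM_T k 0) as [->|Hk].
  - rewrite g_form0. field. lra.
  - rewrite g_form by auto. replace (-k * -1) with k by ring.
    pose proof (D_ne0 k Hk). field. lra.
Qed.

Lemma g_1 m1 m2 k : (0 < m1)%nat -> (0 < m2)%nat -> g m1 m2 1 k = - (2 / INR m1).
Proof.
  intros h1 h2. assert (0 < INR m1) by (apply lt_0_INR; lia).
  assert (0 < INR m2) by (apply lt_0_INR; lia).
  destruct (Req_EM_T k 0) as [->|Hk].
  - rewrite g_form0. field. lra.
  - rewrite g_form by auto. replace (-k * 1) with (-k) by ring.
    pose proof (D_ne0 k Hk). field. lra.
Qed.

Lemma g_decr m1 m2 k t1 t2 : (0 < m1)%nat -> (0 < m2)%nat -> t1 < t2 ->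
  g m1 m2 t2 k < g m1 m2 t1 k.
Proof.
  intros h1 h2 Ht. assert (0 < / INR m1) by (apply Rinv_0_lt_compat, lt_0_INR; lia).
  assert (0 < / INR m2) by (apply Rinv_0_lt_compat, lt_0_INR; lia).
  destruct (Req_EM_T k 0) as [->|Hk].
  - rewrite !g_form0. unfold Rdiv. nra.
  - rewrite !(g_form _ _ _ h1 h2 Hk). unfold Rminus at 1 3. apply Rplus_lt_compat_r.
    destruct (Rlt_or_le 0 k) as [Hp|Hn].
    + pose proof (D_sign k Hp). apply Rmult_lt_compat_l.
      * unfold Rdiv; apply Rmult_lt_0_compat; [lra|]. apply Rinv_0_lt_compat; lra.
      * apply exp_increasing; nra.
    + assert (k < 0) by lra. pose proof (D_sign' k H1).
      assert (Hc : 2 * (/ INR m1 + / INR m2) / (exp k - exp (- k)) < 0).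
      { unfold Rdiv. assert (/ (exp k - exp (-k)) < 0) by (apply Rinv_lt_0_compat; lra). nra. }
      assert (exp (- k * t1) < exp (- k * t2)) by (apply exp_increasing; nra). nra.
Qed.

Lemma g_deriv m1 m2 k z : (0 < m1)%nat -> (0 < m2)%nat ->
  exists l, derivable_pt_lim (fun t => g m1 m2 t k) z l /\ l < 0.
Proof.
  intros h1 h2. assert (0 < / INR m1) by (apply Rinv_0_lt_compat, lt_0_INR; lia).
  assert (0 < / INR m2) by (apply Rinv_0_lt_compat, lt_0_INR; lia).
  destruct (Req_EM_T k 0) as [->|Hk].
  - exists (- / INR m2 - / INR m1). split; [|lra].
    replace (fun t => g m1 m2 t 0) with (fun t => (1 - t) / INR m2 - (1 + t) / INR m1).
    + apply is_derive_Reals. auto_derive; auto. field; split; apply not_0_INR; lia.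
    + apply functional_extensionality; intros; rewrite g_form0; auto.
  - set (c := 2 * (/ INR m1 + / INR m2) / (exp k - exp (- k))).
    exists (c * (- k) * exp (- k * z)). split.
    + replace (fun t => g m1 m2 t k) with (fun t => c * exp ((- k) * t)
         - 2 * (exp k / INR m1 + exp (- k) / INR m2) / (exp k - exp (- k))).
      * apply is_derive_Reals. auto_derive; auto. ring.
      * apply functional_extensionality; intros; rewrite g_form by auto; reflexivity.
    + pose proof (exp_pos (- k * z)).
      destruct (Rlt_or_le 0 k) as [Hp|Hn].
      * pose proof (D_sign k Hp). assert (0 < c).
        { unfold c, Rdiv; apply Rmult_lt_0_compat; [lra|]. apply Rinv_0_lt_compat; lra. }
        clearbody c. assert (0 < c * k * exp (- k * z)) by (repeat apply Rmult_lt_0_compat; lra). lra.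
      * assert (k < 0) by lra. pose proof (D_sign' k H2).
        assert (c < 0).
        { unfold c, Rdiv. assert (/ (exp k - exp (-k)) < 0) by (apply Rinv_lt_0_compat; lra). nra. }
        clearbody c. assert (0 < (- c) * (- k) * exp (- k * z)) by (repeat apply Rmult_lt_0_compat; lra). lra.
Qed.

Lemma pp_pos r d t : Rabs r < 1 -> -1 <= t <= 1 -> 0 < pp r d t.
Proof.
  intros Hr Ht. unfold pp. apply pow_lt.
  destruct (Rabs_def2 _ _ Hr).
  assert (0 <= (1 + r) * (1 + t)) by (apply Rmult_le_pos; lra).
  assert (0 <= (1 - r) * (1 - t)) by (apply Rmult_le_pos; lra).
  destruct (Rle_lt_or_eq_dec (-1) t (proj1 Ht)).
  - assert (0 < (1 + r) * (1 + t)) by (apply Rmult_lt_0_compat; lra). lra.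
  - subst t. lra.
Qed.

Definition phi (x : R) : R := if Req_EM_T x 0 then 1 else (exp x - 1) / x.

Lemma phi_mul x : x * phi x = exp x - 1.
Proof.
  unfold phi. destruct (Req_EM_T x 0) as [->|H].
  - rewrite exp_0. ring.
  - field; auto.
Qed.

Lemma phi_pos x : 0 < phi x.
Proof.
  unfold phi. destruct (Req_EM_T x 0) as [->|H]; [lra|].
  destruct (Rlt_or_le 0 x).
  - pose proof (exp_increasing 0 x H0). rewrite exp_0 in H1.
    unfold Rdiv; apply Rmult_lt_0_compat; [lra| apply Rinv_0_lt_compat; lra].
  - assert (x < 0) by lra. pose proof (exp_increasing x 0 H1). rewrite exp_0 in H2.
    replace ((exp x - 1) / x) with ((1 - exp x) / (- x)) by (field; auto).
    unfold Rdiv; apply Rmult_lt_0_compat; [lra| apply Rinv_0_lt_compat; lra].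
Qed.

Lemma phi_cont : continuity phi.
Proof.
  intros x0. destruct (Req_EM_T x0 0) as [->|H0].
  - apply continuity_pt_locally. intros eps.
    destruct (derivable_pt_lim_exp_0 eps (cond_pos eps)) as [del Hdel].
    exists del. intros y Hy. change (Rabs (y - 0) < del) in Hy.
    unfold phi at 2. destruct (Req_EM_T 0 0) as [_|c]; [|lra].
    unfold phi. destruct (Req_EM_T y 0) as [->|Hy0].
    + rewrite Rminus_eq_0, Rabs_R0. apply cond_pos.
    + specialize (Hdel y Hy0 ltac:(rewrite Rminus_0_r in Hy; exact Hy)).
      rewrite Rplus_0_l, exp_0 in Hdel. exact Hdel.
  - apply continuity_pt_filterlim.
    apply (continuous_ext_loc phi (fun x => (exp x - 1) / x)).
    + assert (Hp : 0 < Rabs x0) by (apply Rabs_pos_lt; auto).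
      exists (mkposreal _ Hp). intros y Hy. change (Rabs (y - x0) < Rabs x0) in Hy.
      unfold phi. destruct (Req_EM_T y 0) as [->|_]; [|reflexivity].
      rewrite Rminus_0_l, Rabs_Ropp in Hy. lra.
    + apply continuity_pt_filterlim. apply continuity_pt_div; auto.
      * apply continuity_pt_minus. apply derivable_continuous_pt, derivable_pt_exp.
        apply continuity_pt_const. intros a b; auto.
      * apply continuity_pt_id.
Qed.

Lemma phi_nz x : x <> 0 -> phi x = (exp x - 1) / x.
Proof. intros H; unfold phi; destruct (Req_EM_T x 0); [contradiction|reflexivity]. Qed.
Lemma phi_0 : phi 0 = 1.
Proof. unfold phi; destruct (Req_EM_T 0 0); [reflexivity|lra]. Qed.

Definition gphi m1 m2 t k :=
  (- (/ INR m1 + / INR m2) * t * phi (- (k * t)) - / INR m1 * phi k + / INR m2 * phi (- k))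
  * exp k / phi (2 * k).

Lemma g_gphi m1 m2 t k : (0 < m1)%nat -> (0 < m2)%nat -> g m1 m2 t k = gphi m1 m2 t k.
Proof.
  intros h1 h2. assert (INR m1 <> 0) by (apply not_0_INR; lia).
  assert (INR m2 <> 0) by (apply not_0_INR; lia).
  unfold gphi. destruct (Req_EM_T k 0) as [->|Hk].
  - rewrite g_form0. rewrite Rmult_0_l, Ropp_0, Rmult_0_r, phi_0, exp_0. field; auto.
  - rewrite g_form by auto.
    assert (HE : 0 < exp k) by apply exp_pos.
    assert (H2k : 2 * k <> 0) by lra.
    rewrite (phi_nz (2 * k)) by auto. rewrite (phi_nz k) by auto.
    rewrite (phi_nz (- k)) by lra.
    replace (exp (2 * k)) with (exp k * exp k) by (rewrite <- exp_plus; f_equal; ring).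
    rewrite !exp_Ropp.
    assert (HEE : exp k * exp k - 1 <> 0).
    { intro C. apply (D_ne0 k Hk). rewrite exp_Ropp.
      replace (exp k - / exp k) with ((exp k * exp k - 1) / exp k) by (field; lra).
      rewrite C. unfold Rdiv; ring. }
    assert (HD : exp k - / exp k <> 0).
    { intro C. apply (D_ne0 k Hk). rewrite exp_Ropp. exact C. }
    destruct (Req_EM_T t 0) as [->|Ht].
    + replace (k * 0) with 0 by ring. replace (- k * 0) with 0 by ring. rewrite Ropp_0, exp_0. field. repeat split; auto; lra.
    + rewrite (phi_nz (- (k * t))) by (intro C; apply Ht; nra).
      replace (- k * t) with (- (k * t)) by ring.
      field. repeat split; auto; try lra.
Qed.

Lemma exR (f : R -> R) a b : (forall x, continuity_pt f x) -> ex_RInt f a b.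
Proof.
  intros H. apply (ex_RInt_continuous (V:=R_CompleteNormedModule)).
  intros; apply continuity_pt_filterlim; auto.
Qed.

Lemma param_cont (h w : R -> R) : continuity h -> (forall t, continuity_pt w t) ->
  continuity (fun k => RInt (fun t => h (k * t) * w t) (-1) 1).
Proof.
  intros Hh Hw k0. apply continuity_pt_locally. intros eps.
  set (R0 := Rabs k0 + 1).
  assert (HU := Heine h (fun c => - R0 <= c <= R0) (compact_P3 _ _) (fun x _ => Hh x)).
  destruct (continuity_ab_maj (fun t => Rabs (w t)) (-1) 1 ltac:(lra)) as [Mx [HM _]].
  { intros c _. apply (continuity_pt_comp w Rabs); auto. apply Rcontinuity_abs. }
  set (W := Rabs (w Mx)). assert (HW0 : 0 <= W) by apply Rabs_pos.
  assert (He' : 0 < eps / (2 * (W + 1))).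
  { apply Rdiv_lt_0_compat; [apply cond_pos | lra]. }
  destruct (HU (mkposreal _ He')) as [del Hdel]. simpl in Hdel.
  assert (Hm : 0 < Rmin del 1) by (apply Rmin_pos; [apply cond_pos|lra]).
  exists (mkposreal _ Hm). intros k Hk. change (Rabs (k - k0) < Rmin del 1) in Hk.
  assert (Hk1 : Rabs (k - k0) < del) by (eapply Rlt_le_trans; [exact Hk| apply Rmin_l]).
  assert (Hk2 : Rabs (k - k0) < 1) by (eapply Rlt_le_trans; [exact Hk| apply Rmin_r]).
  assert (Hc : forall k1, forall x, continuity_pt (fun t => h (k1 * t) * w t) x).
  { intros k1 x. apply continuity_pt_mult; auto.
    apply (continuity_pt_comp (fun t => k1 * t) h).
    - apply continuity_pt_scal, continuity_pt_id.
    - apply Hh. }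
  assert (E : RInt (fun t => h (k * t) * w t) (-1) 1 - RInt (fun t => h (k0 * t) * w t) (-1) 1
     = RInt (fun t => h (k * t) * w t - h (k0 * t) * w t) (-1) 1).
  { symmetry. apply (RInt_minus (V:=R_CompleteNormedModule)); apply exR; auto. }
  rewrite E.
  eapply Rle_lt_trans.
  - apply abs_RInt_le_const with (M := eps / (2 * (W + 1)) * W); [lra| |].
    + apply exR. intros x. apply continuity_pt_minus; apply Hc.
    + intros t Ht. replace (h (k * t) * w t - h (k0 * t) * w t)
        with ((h (k * t) - h (k0 * t)) * w t) by ring.
      rewrite Rabs_mult. apply Rmult_le_compat; try apply Rabs_pos.
      * apply Rlt_le, Hdel.
        -- apply Rabs_le_between. rewrite Rabs_mult.
           assert (Rabs t <= 1) by (apply Rabs_le; lra).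
           assert (Rabs k <= R0).
           { unfold R0. replace k with ((k - k0) + k0) by ring.
             eapply Rle_trans; [apply Rabs_triang|]. lra. }
           replace R0 with (R0 * 1) by ring. apply Rmult_le_compat; auto; apply Rabs_pos.
        -- apply Rabs_le_between. rewrite Rabs_mult.
           assert (Rabs t <= 1) by (apply Rabs_le; lra).
           unfold R0. replace (Rabs k0 + 1) with ((Rabs k0 + 1) * 1) by ring.
           apply Rmult_le_compat; auto; try apply Rabs_pos. lra.
        -- replace (k * t - k0 * t) with ((k - k0) * t) by ring.
           rewrite Rabs_mult. assert (Rabs t <= 1) by (apply Rabs_le; lra).
           eapply Rle_lt_trans; [|exact Hk1].
           replace (Rabs (k - k0)) with (Rabs (k - k0) * 1) at 2 by ring.
           apply Rmult_le_compat_l; auto. apply Rabs_pos.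
      * apply HM; auto.
  - replace ((1 - -1) * (eps / (2 * (W + 1)) * W)) with (eps * (W / (W + 1))) by (field; lra).
    assert (W / (W + 1) < 1).
    { apply (Rmult_lt_reg_r (W + 1)); [lra|]. unfold Rdiv. rewrite Rmult_assoc, Rinv_l by lra. lra. }
    pose proof (cond_pos eps).
    assert (0 <= W / (W + 1)) by (apply Rle_mult_inv_pos; lra). nra.
Qed.

Lemma pp_cont r d : forall x, continuity_pt (pp r d) x.
Proof. apply Cinf_cont, pp_cinf. Qed.

Lemma J_cont m1 m2 r d : (0 < m1)%nat -> (0 < m2)%nat ->
  continuity (fun k => RInt (fun t => g m1 m2 t k * pp r d t) (-1) 1).
Proof.
  intros h1 h2.
  set (a := / INR m1). set (b := / INR m2).
  set (al := fun k => - (a + b) * exp k / phi (2 * k)).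
  set (be := fun k => (- a * phi k + b * phi (- k)) * exp k / phi (2 * k)).
  set (Q := fun k => RInt (fun t => (fun x => phi (- x)) (k * t) * (fun t => t * pp r d t) t) (-1) 1).
  set (P := RInt (pp r d) (-1) 1).
  assert (Hw : forall t, continuity_pt (fun t => t * pp r d t) t).
  { intros t; apply continuity_pt_mult; [apply continuity_pt_id | apply pp_cont]. }
  assert (Hh : continuity (fun x => phi (- x))).
  { intros x. apply (continuity_pt_comp Ropp phi). apply continuity_pt_opp, continuity_pt_id.
    apply phi_cont. }
  assert (EJ : (fun k => RInt (fun t => g m1 m2 t k * pp r d t) (-1) 1) =
               (fun k => al k * Q k + be k * P)).
  { apply functional_extensionality; intros k.
    unfold Q, P.
    assert (Hf : forall x, continuity_pt (fun t => (fun x => phi (- x)) (k * t) * (fun t => t * pp r d t) t) x).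
    { intros x. apply continuity_pt_mult; auto.
      apply (continuity_pt_comp (fun t => k * t) (fun x => phi (- x))); auto.
      apply continuity_pt_scal, continuity_pt_id. }
    rewrite <- (RInt_scal (V:=R_CompleteNormedModule)) by (apply exR; auto).
    rewrite <- (RInt_scal (V:=R_CompleteNormedModule)) by (apply exR; apply pp_cont).
    rewrite <- (RInt_plus (V:=R_CompleteNormedModule)).
    2, 3: apply (ex_RInt_scal (V:=R_CompleteNormedModule)); apply exR; auto; apply pp_cont.
    apply RInt_ext. intros t _. rewrite g_gphi by auto. unfold gphi, al, be.
    change (plus ?x ?y) with (x + y). change (scal ?x ?y) with (x * y).
    fold a b. match goal with |- ?x = ?y => change (@eq R x y) end. field. pose proof (phi_pos (2 * k)). lra. }
  rewrite EJ. intros k.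
  assert (Hp2 : forall k, phi (2 * k) <> 0) by (intros; apply Rgt_not_eq, phi_pos).
  assert (Hphi2 : continuity_pt (fun k => phi (2 * k)) k).
  { apply (continuity_pt_comp (fun k => 2 * k) phi).
    apply continuity_pt_scal, continuity_pt_id. apply phi_cont. }
  assert (Hexp : continuity_pt exp k) by (apply derivable_continuous_pt, derivable_pt_exp).
  apply continuity_pt_plus; apply continuity_pt_mult.
  - unfold al. apply (continuity_pt_div (fun k => - (a + b) * exp k) (fun k => phi (2 * k))); auto.
    apply continuity_pt_scal; auto.
  - apply param_cont; auto.
  - unfold be. apply (continuity_pt_div (fun k => (- a * phi k + b * phi (- k)) * exp k) (fun k => phi (2 * k))); auto.
    apply continuity_pt_mult; auto. apply continuity_pt_plus.
    + apply continuity_pt_scal, phi_cont.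
    + apply continuity_pt_scal. apply Hh.
  - apply continuity_pt_const. intros x y; reflexivity.
Qed.

Lemma int_exp K : K <> 0 -> RInt (fun t => exp (- K * t)) (-1) 1 = (exp K - exp (- K)) / K.
Proof.
  intros HK.
  apply is_RInt_unique.
  assert (Hi : is_RInt (fun t => exp (- K * t)) (-1) 1
     (minus (- exp (- K * 1) / K) (- exp (- K * -1) / K))).
  { apply (is_RInt_derive (V:=R_CompleteNormedModule) (fun t => - exp (- K * t) / K)).
    + intros x _. auto_derive; auto. field; auto.
    + intros x _. apply continuity_pt_filterlim.
      apply (continuity_pt_comp (fun t => - K * t) exp).
      apply continuity_pt_scal, continuity_pt_id.
      apply derivable_continuous_pt, derivable_pt_exp. }
  replace ((exp K - exp (- K)) / K) with (minus (- exp (- K * 1) / K) (- exp (- K * -1) / K)); auto.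
  change (minus ?x ?y) with (x - y).
  replace (- K * 1) with (- K) by ring. replace (- K * -1) with K by ring. match goal with |- ?x = ?y => change (@eq R x y) end. field; auto.
Qed.

Lemma pp_le r d t : Rabs r < 1 -> -1 <= t <= 1 -> pp r d t <= 2 ^ d.
Proof.
  intros Hr Ht. unfold pp. apply pow_incr. destruct (Rabs_def2 _ _ Hr).
  split.
  - pose proof (pp_pos r 1 t Hr Ht). unfold pp in H1. lra.
  - assert (Rabs (r * t) <= 1).
    { rewrite Rabs_mult. replace 1 with (1 * 1) by ring.
      apply Rmult_le_compat; try apply Rabs_pos; [lra|]. apply Rabs_le; lra. }
    apply Rabs_le_between in H1. lra.
Qed.

Lemma expc K : forall x, continuity_pt (fun t => exp (- K * t)) x.
Proof.
  intros x. apply (continuity_pt_comp (fun t => - K * t) exp).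
  apply continuity_pt_scal, continuity_pt_id.
  apply derivable_continuous_pt, derivable_pt_exp.
Qed.

Lemma J_form m1 m2 r d K : (0 < m1)%nat -> (0 < m2)%nat -> K <> 0 ->
  RInt (fun t => g m1 m2 t K * pp r d t) (-1) 1 =
  (2 * (/ INR m1 + / INR m2) / (exp K - exp (- K))) *
     RInt (fun t => exp (- K * t) * pp r d t) (-1) 1
  - 2 * (exp K / INR m1 + exp (- K) / INR m2) / (exp K - exp (- K)) * RInt (pp r d) (-1) 1.
Proof.
  intros h1 h2 HK.
  assert (Hc1 : forall x, continuity_pt (fun t => exp (- K * t) * pp r d t) x).
  { intros; apply continuity_pt_mult; [apply expc|apply pp_cont]. }
  rewrite <- (RInt_scal (V:=R_CompleteNormedModule)) by (apply exR; auto).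
  rewrite <- (RInt_scal (V:=R_CompleteNormedModule)) by (apply exR; apply pp_cont).
  rewrite <- (RInt_minus (V:=R_CompleteNormedModule)).
  2, 3: apply (ex_RInt_scal (V:=R_CompleteNormedModule)); apply exR; auto; try apply pp_cont.
  apply RInt_ext. intros t _. rewrite g_form by auto.
  change (minus ?x ?y) with (x - y). change (scal ?x ?y) with (x * y).
  match goal with |- ?x = ?y => change (@eq R x y) end. ring.
Qed.

Lemma X_bound r d K : Rabs r < 1 -> K <> 0 ->
  RInt (fun t => exp (- K * t) * pp r d t) (-1) 1 <= 2 ^ d * ((exp K - exp (- K)) / K).
Proof.
  intros Hr HK. rewrite <- int_exp by auto.
  rewrite <- (RInt_scal (V:=R_CompleteNormedModule)) by (apply exR; apply expc).
  apply RInt_le; [lra| | |].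
  - apply exR. intros; apply continuity_pt_mult; [apply expc|apply pp_cont].
  - apply (ex_RInt_scal (V:=R_CompleteNormedModule)); apply exR; apply expc.
  - intros x Hx. change (scal ?x ?y) with (x * y). rewrite (Rmult_comm (2 ^ d)).
    apply Rmult_le_compat_l. apply Rlt_le, exp_pos. apply pp_le; auto; lra.
Qed.

Lemma P_pos r d : Rabs r < 1 -> 0 < RInt (pp r d) (-1) 1.
Proof.
  intros Hr. apply RInt_gt_0; [lra| |].
  - intros; apply pp_pos; auto; lra.
  - intros; apply continuity_pt_filterlim, pp_cont.
Qed.

Lemma k_exists m1 m2 r d : (0 < m1)%nat -> (0 < m2)%nat -> Rabs r < 1 ->
  exists k, RInt (fun t => g m1 m2 t k * pp r d t) (-1) 1 = 0.
Proof.
  intros h1 h2 Hr.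
  set (J := fun k => RInt (fun t => g m1 m2 t k * pp r d t) (-1) 1).
  assert (Ha : 0 < / INR m1) by (apply Rinv_0_lt_compat, lt_0_INR; lia).
  assert (Hb : 0 < / INR m2) by (apply Rinv_0_lt_compat, lt_0_INR; lia).
  set (a := / INR m1) in *. set (b := / INR m2) in *.
  assert (HM : 0 < 2 ^ d) by (apply pow_lt; lra).
  set (M := 2 ^ d) in *.
  assert (HP := P_pos r d Hr). set (P := RInt (pp r d) (-1) 1) in *.
  set (K := (a + b) * M / (a * P) + (a + b) * M / (b * P) + 1).
  assert (HK1 : (a + b) * M / (a * P) < K).
  { unfold K. assert (0 < (a + b) * M / (b * P)).
    { apply Rdiv_lt_0_compat; apply Rmult_lt_0_compat; lra. } lra. }
  assert (HK2 : (a + b) * M / (b * P) < K).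
  { unfold K. assert (0 < (a + b) * M / (a * P)).
    { apply Rdiv_lt_0_compat; apply Rmult_lt_0_compat; lra. } lra. }
  assert (HK : 0 < K).
  { assert (0 < (a + b) * M / (a * P)).
    { apply Rdiv_lt_0_compat; apply Rmult_lt_0_compat; lra. } lra. }
  assert (HaP : (a + b) * M < K * (a * P)).
  { apply (Rmult_lt_compat_r (a * P)) in HK1; [|apply Rmult_lt_0_compat; lra].
    unfold Rdiv in HK1. rewrite Rmult_assoc, Rinv_l in HK1 by (apply Rgt_not_eq, Rmult_lt_0_compat; lra). lra. }
  assert (HbP : (a + b) * M < K * (b * P)).
  { apply (Rmult_lt_compat_r (b * P)) in HK2; [|apply Rmult_lt_0_compat; lra].
    unfold Rdiv in HK2. rewrite Rmult_assoc, Rinv_l in HK2 by (apply Rgt_not_eq, Rmult_lt_0_compat; lra). lra. }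
  assert (JK : J K < 0).
  { unfold J. rewrite J_form by (auto; lra). fold a b P.
    pose proof (X_bound r d K Hr ltac:(lra)) as HX. fold M in HX.
    set (X := RInt (fun t => exp (- K * t) * pp r d t) (-1) 1) in *.
    assert (HD := D_sign K HK).
    set (E := exp K) in *. set (e := exp (- K)) in *.
    assert (He : 0 < e) by apply exp_pos.
    assert (HC : 0 < 2 * (a + b) / (E - e)) by (apply Rdiv_lt_0_compat; lra).
    assert (H1 : 2 * (a + b) / (E - e) * X <= 2 * (a + b) * M / K).
    { eapply Rle_trans. apply Rmult_le_compat_l; [lra|exact HX].
      right. field. split; lra. }
    assert (H2 : 2 * a <= 2 * (E / INR m1 + e / INR m2) / (E - e)).
    { replace (2 * (E / INR m1 + e / INR m2) / (E - e)) with (2 * a + 2 * (a + b) * e / (E - e))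
        by (unfold a, b; field; repeat split; try lra; apply not_0_INR; lia).
      assert (0 < 2 * (a + b) * e / (E - e)).
      { apply Rdiv_lt_0_compat; [|lra]. apply Rmult_lt_0_compat; lra. } lra. }
    assert (H3 : 2 * a * P <= 2 * (E / INR m1 + e / INR m2) / (E - e) * P)
      by (apply Rmult_le_compat_r; lra).
    assert (H4 : 2 * (a + b) * M / K < 2 * a * P).
    { apply (Rmult_lt_reg_r K); auto. unfold Rdiv. rewrite Rmult_assoc, Rinv_l by lra. lra. }
    lra. }
  assert (JmK : 0 < J (- K)).
  { unfold J. rewrite J_form by (auto; lra). fold a b P.
    pose proof (X_bound r d (- K) Hr ltac:(lra)) as HX. fold M in HX.
    set (X := RInt (fun t => exp (- - K * t) * pp r d t) (-1) 1) in *.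
    assert (HD := D_sign K HK).
    rewrite Ropp_involutive in *.
    set (E := exp K) in *. set (e := exp (- K)) in *.
    assert (He : 0 < e) by apply exp_pos.
    assert (HC : 0 < 2 * (a + b) / (E - e)) by (apply Rdiv_lt_0_compat; lra).
    replace (2 * (a + b) / (e - E)) with (- (2 * (a + b) / (E - e))) by (field; lra).
    assert (H1 : - (2 * (a + b) * M / K) <= - (2 * (a + b) / (E - e)) * X).
    { replace (- (2 * (a + b) / (E - e)) * X) with (- (2 * (a + b) / (E - e) * X)) by ring.
      apply Ropp_le_contravar.
      eapply Rle_trans. apply Rmult_le_compat_l; [lra|exact HX].
      right. field. split; lra. }
    assert (H2 : 2 * (e / INR m1 + E / INR m2) / (e - E) <= - (2 * b)).
    { replace (2 * (e / INR m1 + E / INR m2) / (e - E)) with (- (2 * b) - 2 * (a + b) * e / (E - e))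
        by (unfold a, b; field; repeat split; try lra; apply not_0_INR; lia).
      assert (0 < 2 * (a + b) * e / (E - e)).
      { apply Rdiv_lt_0_compat; [|lra]. apply Rmult_lt_0_compat; lra. } lra. }
    assert (H3 : 2 * (e / INR m1 + E / INR m2) / (e - E) * P <= - (2 * b) * P)
      by (apply Rmult_le_compat_r; lra).
    assert (H4 : 2 * (a + b) * M / K < 2 * b * P).
    { apply (Rmult_lt_reg_r K); auto. unfold Rdiv. rewrite Rmult_assoc, Rinv_l by lra. lra. }
    lra. }
  destruct (IVT (fun k => - J k) (- K) K) as [k [_ Hk]].
  - apply continuity_opp. apply J_cont; auto.
  - lra.
  - lra.
  - lra.
  - exists k. unfold J in Hk. lra.
Qed.

Lemma main_given_k (m1 m2 : nat) (r : R) (d : nat) (k : R)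
  (hm1 : (0 < m1)%nat) (hm2 : (0 < m2)%nat)
  (hr1 : Rabs r < 1)
  (Hk : RInt (fun t => g m1 m2 t k * pp r d t) (-1) 1 = 0) :
  let F := fun z => RInt (fun t => g m1 m2 t k * pp r d t) (-1) z in
  let p := pp r d in
  smooth_on F (-1) 1 /\
  (forall z, -1 < z < 1 -> F z > 0) /\
  F (-1) = 0 /\ F 1 = 0 /\
  derivable_pt_lim F (-1) (2 * p (-1) / INR m2) /\
  derivable_pt_lim F 1 (- (2 * p 1 / INR m1)) /\
  (exists F' : R -> R,
     (forall t, derivable_pt_lim F t (F' t)) /\
     forall z, -1 <= z <= 1 ->
       exists l, derivable_pt_lim (fun t => F' t / p t) z l /\ l < 0).
Proof.
  intros F p.
  set (G := fun t => g m1 m2 t k * pp r d t).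
  assert (HGi : Cinf G) by (apply G_cinf; auto).
  assert (Hc : forall x, continuous G x) by (apply Cinf_continuous; auto).
  assert (Hex : forall a b, ex_RInt G a b).
  { intros; apply (ex_RInt_continuous (V:=R_CompleteNormedModule)); intros; auto. }
  assert (HF : forall t, derivable_pt_lim F t (G t)).
  { intros t. apply is_derive_Reals. apply (is_derive_RInt G F (-1) t); auto.
    apply filter_forall; intros; unfold F; apply (RInt_correct (V:=R_CompleteNormedModule)); auto. }
  assert (Hm1 : 0 < INR m1) by (apply lt_0_INR; lia).
  assert (Hm2 : 0 < INR m2) by (apply lt_0_INR; lia).
  assert (Hpos : forall t, -1 <= t <= 1 -> 0 < p t) by (intros; apply pp_pos; auto).
  split; [|split; [|split; [|split; [|split; [|split]]]]].
  - exists (fun n => match n with O => F | S n => Derive_n G n end). split; auto.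
    intros n x _. destruct n.
    + apply HF.
    + apply Cinf_Derive_n; auto.
  - intros z Hz.
    destruct (Rle_or_lt 0 (g m1 m2 z k)) as [Hg|Hg].
    + unfold F. apply Rlt_gt. apply RInt_gt_0; [lra| |intros; auto].
      intros x Hx. apply Rmult_lt_0_compat.
      * pose proof (g_decr m1 m2 k x z hm1 hm2 (proj2 Hx)). lra.
      * apply pp_pos; auto; lra.
    + assert (HC := RInt_Chasles G (-1) z 1 (Hex _ _) (Hex _ _)).
      change (RInt G (-1) 1 = 0) in Hk.
      assert (RInt G z 1 < RInt (fun _ => 0) z 1).
      { apply RInt_lt; [lra| intros; apply continuous_const | intros; auto |].
        intros x Hx. unfold G. assert (0 < pp r d x) by (apply pp_pos; auto; lra).
        pose proof (g_decr m1 m2 k z x hm1 hm2 (proj1 Hx)).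
        assert (0 < - g m1 m2 x k * pp r d x) by (apply Rmult_lt_0_compat; lra). lra. }
      rewrite RInt_const in H. change (scal (1 - z) 0) with ((1 - z) * 0) in H.
      change (plus (RInt G (-1) z) (RInt G z 1) = RInt G (-1) 1) in HC.
      assert (RInt G (-1) z + RInt G z 1 = RInt G (-1) 1) by exact HC. unfold F. fold G. lra.
  - unfold F. rewrite RInt_point. reflexivity.
  - exact Hk.
  - replace (2 * p (-1) / INR m2) with (G (-1)); auto.
    unfold G. rewrite g_m1; auto. unfold p. field. lra.
  - replace (- (2 * p 1 / INR m1)) with (G 1); auto.
    unfold G. rewrite g_1; auto. unfold p. field. lra.
  - exists G. split; auto. intros z Hz.
    destruct (g_deriv m1 m2 k z hm1 hm2) as [l [Hl Hl0]].
    destruct (pp_cinf r d 1%nat) as [p' [Hp' _]].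
    pose proof (Hpos z Hz).
    exists l. split; auto.
    assert (HG' : derivable_pt_lim G z (l * pp r d z + g m1 m2 z k * p' z)).
    { apply (derivable_pt_lim_mult (fun t => g m1 m2 t k) (pp r d) z); auto. }
    pose proof (derivable_pt_lim_div G p z _ _ HG' (Hp' z) ltac:(lra)).
    replace l with (((l * pp r d z + g m1 m2 z k * p' z) * p z - p' z * G z) / (p z)²).
    + exact H0.
    + unfold G, p, Rsqr. fold p. field. lra.
Qed.

Theorem mainTheorem8 (m1 m2 : nat) (r : R) (d : nat)
  (hm1 : (0 < m1)%nat) (hm2 : (0 < m2)%nat) (hd : (0 < d)%nat)
  (hr0 : 0 < Rabs r) (hr1 : Rabs r < 1) :
  let F := FF m1 m2 r d in
  let p := pp r d in
  smooth_on F (-1) 1 /\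
  (forall z, -1 < z < 1 -> F z > 0) /\
  F (-1) = 0 /\ F 1 = 0 /\
  derivable_pt_lim F (-1) (2 * p (-1) / INR m2) /\
  derivable_pt_lim F 1 (- (2 * p 1 / INR m1)) /\
  (exists F' : R -> R,
     (forall t, derivable_pt_lim F t (F' t)) /\
     forall z, -1 <= z <= 1 ->
       exists l, derivable_pt_lim (fun t => F' t / p t) z l /\ l < 0).
Proof.
  assert (Hc : forall k x, continuity_pt (fun t => g m1 m2 t k * pp r d t) x).
  { intros k; apply Cinf_cont, G_cinf; auto. }
  assert (Hspec : Defs.RInt (fun t => g m1 m2 t (kk m1 m2 r d) * pp r d t) (-1) 1 = 0).
  { unfold kk. apply (epsilon_spec (inhabits 0)
      (fun k => Defs.RInt (fun t => g m1 m2 t k * pp r d t) (-1) 1 = 0)).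
    destruct (k_exists m1 m2 r d hm1 hm2 hr1) as [k Hk].
    exists k. rewrite bridge; auto. }
  rewrite bridge in Hspec by auto.
  assert (EF : FF m1 m2 r d = fun z => RInt (fun t => g m1 m2 t (kk m1 m2 r d) * pp r d t) (-1) z).
  { apply functional_extensionality; intros z. unfold FF. apply bridge; auto. }
  intros F p. unfold F. rewrite EF.
  exact (main_given_k m1 m2 r d (kk m1 m2 r d) hm1 hm2 hr1 Hspec).
Qed.
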